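(* Let $A$ and $B$ be square $\mathbb{N}$-matrices. Then $A$ and $B$ are unitally shift equivalent if and only if their unital dimension data $(G_A,G_A^+,\theta_A,u_A)$ and $(G_B,G_B^+,\theta_B,u_B)$ are isomorphic, i.e. there is a group isomorphism $\Theta\colon G_A\to G_B$ with $\Theta(G_A^+)=G_B^+$, $\Theta\circ\theta_A=\theta_B\circ\Theta$ and $\Theta(u_A)=u_B$.
   Context: $\mathbb{N}=\{0,1,2,\dots\}$. For a square $\mathbb{N}$-matrix $A$ of size $|A|$, the dimension group is $G_A=(\mathbb{Z}^{|A|}\times\mathbb{N})/\sim$, where $(v,k)\sim(v',k')$ iff there is $l\in\mathbb{N}$ (with $l\ge k,k'$) such that $(A^t)^{l-k}v=(A^t)^{l-k'}v'$; write $[v,k]$ for classes. It is the inductive limit of $\mathbb{Z}^{|A|}\xrightarrow{A^t}\mathbb{Z}^{|A|}\xrightarrow{A^t}\cdots$. The positive cone is $G_A^+=\{[v,k]: v\in\mathbb{N}^{|A|}\}$, $\theta_A$ is the automorphism induced by multiplication by $A^t$, and $u_A=[\underline1,0]$ where $\underline1$ is the all-ones column vector. Two square $\mathbb{N}$-matrices $A,B$ are shift equivalent if there are an integer $\ell\ge1$ and rectangular $\mathbb{N}$-matrices $R,S$ with $A^\ell=RS$, $B^\ell=SR$, $AR=RB$, $BS=SA$. Such a shift equivalence $(R,S)$ is unital if there are $m,k\in\mathbb{N}$ with $(B^t)^mR^t\underline{1}=(B^t)^{m+k}\underline{1}$ (equivalently, the induced map $\hat R\colon G_A\to G_B$, $\hat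 R[v,k]=[R^tv,k]$, satisfies $\hat R(u_A)=\theta_B^k(u_B)$ for some $k\in\mathbb{N}$). $A$ and $B$ are unitally shift equivalent if a unital shift equivalence from $A$ to $B$ exists. *)

(* Defs.v *)
From mathcomp Require Import all_boot all_order all_algebra.
Set Implicit Arguments. Unset Strict Implicit. Unset Printing Implicit Defensive.
Import GRing.Theory Num.Theory.
Local Open Scope ring_scope.

Definition shift_equiv_by (n m : nat) (A : 'M[nat]_n) (B : 'M[nat]_m)
  (l : nat) (R : 'M[nat]_(n, m)) (S : 'M[nat]_(m, n)) : Prop :=
  [/\ (0 < l)%N, A ^+ l = R *m S, B ^+ l = S *m R,
      A *m R = R *m B & B *m S = S *m A].

Definition unital_se (n m : nat) (B : 'M[nat]_m) (R : 'M[nat]_(n, m)) : Prop :=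
  exists p k : nat,
    (B^T) ^+ p *m (R^T *m const_mx 1 : 'cV[nat]_m)
    = (B^T) ^+ (p + k) *m (const_mx 1 : 'cV[nat]_m).

Definition unitally_shift_equivalent (n m : nat) (A : 'M[nat]_n) (B : 'M[nat]_m)
  : Prop :=
  exists (l : nat) (R : 'M[nat]_(n, m)) (S : 'M[nat]_(m, n)),
    shift_equiv_by A B l R S /\ unital_se B R.

(** Dimension group G_A = (Z^|A| x N)/~, handled through representatives.
    A representative (v, k) stands for the class [v, k]. *)
Definition drep (n : nat) : Type := ('cV[int]_n * nat)%type.

Definition tZ (n : nat) (A : 'M[nat]_n) : 'M[int]_n :=
  (map_mx (fun x : nat => x%:Z) A)^T.

Definition tpow (n : nat) (A : 'M[nat]_n) (j : nat) (v : 'cV[int]_n) : 'cV[int]_n :=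
  (tZ A) ^+ j *m v.

Definition dim_rel (n : nat) (A : 'M[nat]_n) (x y : drep n) : Prop :=
  exists l : nat, [/\ (x.2 <= l)%N, (y.2 <= l)%N &
                     tpow A (l - x.2) x.1 = tpow A (l - y.2) y.1].

Definition dim_add (n : nat) (A : 'M[nat]_n) (x y : drep n) : drep n :=
  (tpow A y.2 x.1 + tpow A x.2 y.1, (x.2 + y.2)%N).

Definition dim_pos (n : nat) (A : 'M[nat]_n) (x : drep n) : Prop :=
  exists y : drep n, dim_rel A x y /\ forall i, 0 <= y.1 i 0.

Definition dim_theta (n : nat) (A : 'M[nat]_n) (x : drep n) : drep n :=
  (tZ A *m x.1, x.2).

Definition dim_unit (n : nat) : drep n := (const_mx 1, 0%N).

(** [Th] (on representatives) induces a group isomorphism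
    Theta : G_A -> G_B with Theta(G_A^+) = G_B^+, Theta o theta_A = theta_B o Theta
    and Theta(u_A) = u_B. *)
Definition dim_data_iso_by (n m : nat) (A : 'M[nat]_n) (B : 'M[nat]_m)
  (Th : drep n -> drep m) : Prop :=
  (forall x y, dim_rel A x y -> dim_rel B (Th x) (Th y)) /\
  (forall x y, dim_rel B (Th (dim_add A x y)) (dim_add B (Th x) (Th y))) /\
  (forall x y, dim_rel B (Th x) (Th y) -> dim_rel A x y) /\
  (forall y, exists x, dim_rel B (Th x) y) /\
  (forall x, dim_pos A x -> dim_pos B (Th x)) /\
  (forall y, dim_pos B y -> exists x, dim_pos A x /\ dim_rel B (Th x) y) /\
  (forall x, dim_rel B (Th (dim_theta A x)) (dim_theta B (Th x))) /\
  dim_rel B (Th (dim_unit n)) (dim_unit m).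

Definition dim_data_isomorphic (n m : nat) (A : 'M[nat]_n) (B : 'M[nat]_m) : Prop :=
  exists Th : drep n -> drep m, dim_data_iso_by A B Th.

(* Main.v *)
Require Import Defs.
From Stdlib Require Import IndefiniteDescription.
From mathcomp Require Import all_boot all_order all_algebra.
From mathcomp Require Import zify.
Set Implicit Arguments. Unset Strict Implicit. Unset Printing Implicit Defensive.
Import GRing.Theory Num.Theory.
Local Open Scope ring_scope.

Lemma fchoice (I T : Type) (P : I -> T -> Prop) :
  (forall i, exists x, P i x) -> exists f : I -> T, forall i, P i (f i).
Proof.
move=> H; exists (fun i => proj1_sig (constructive_indefinite_description _ (H i))).
by move=> i; case: (constructive_indefinite_description _ (H i)).
Qed.

Lemma fin_common (k : nat) (P : 'I_k -> nat -> Prop) :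
  (forall i N N', (N <= N')%N -> P i N -> P i N') ->
  (forall i, exists N, P i N) -> exists N, forall i, P i N.
Proof.
move=> Hm /fchoice [f Hf]; exists (\max_i f i) => i.
exact: (Hm _ _ _ (leq_bigmax i) (Hf i)).
Qed.

Lemma tpow0 n (A : 'M[nat]_n) v : tpow A 0 v = v.
Proof. by rewrite /tpow expr0 mul1mx. Qed.

Lemma tpowD n (A : 'M[nat]_n) i j v : tpow A (i + j) v = tpow A i (tpow A j v).
Proof. by rewrite /tpow exprD -mulmxE mulmxA. Qed.

Lemma tpowDr n (A : 'M[nat]_n) i v w : tpow A i (v + w) = tpow A i v + tpow A i w.
Proof. by rewrite /tpow mulmxDr. Qed.

Lemma tpowN n (A : 'M[nat]_n) i v : tpow A i (- v) = - tpow A i v.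
Proof. by rewrite /tpow mulmxN. Qed.

Lemma tpow_0 n (A : 'M[nat]_n) i : tpow A i 0 = 0.
Proof. by rewrite /tpow mulmx0. Qed.

Lemma tpowT n (A : 'M[nat]_n) i v : tpow A i (tZ A *m v) = tZ A *m tpow A i v.
Proof.
rewrite /tpow !mulmxA; congr (_ *m _).
by rewrite !mulmxE -exprSr -exprS.
Qed.

Lemma tpowS n (A : 'M[nat]_n) i v : tpow A i.+1 v = tZ A *m tpow A i v.
Proof. by rewrite /tpow exprS -mulmxE mulmxA. Qed.

Lemma rel_up n (A : 'M[nat]_n) (x y : drep n) L L' :
  (x.2 <= L)%N -> (y.2 <= L)%N -> (L <= L')%N ->
  tpow A (L - x.2) x.1 = tpow A (L - y.2) y.1 ->
  tpow A (L' - x.2) x.1 = tpow A (L' - y.2) y.1.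
Proof.
move=> h1 h2 h3 e.
have -> : (L' - x.2 = (L' - L) + (L - x.2))%N by lia.
have -> : (L' - y.2 = (L' - L) + (L - y.2))%N by lia.
by rewrite !tpowD e.
Qed.

Lemma rel_refl n (A : 'M[nat]_n) x : dim_rel A x x.
Proof. by exists x.2. Qed.

Lemma rel_sym n (A : 'M[nat]_n) x y : dim_rel A x y -> dim_rel A y x.
Proof. by case=> L [h1 h2 e]; exists L. Qed.

Lemma rel_trans n (A : 'M[nat]_n) x y z :
  dim_rel A x y -> dim_rel A y z -> dim_rel A x z.
Proof.
case=> L1 [h1 h2 e1] [L2 [h3 h4 e2]]; exists (maxn L1 L2); split; try lia.
rewrite (rel_up h1 h2 _ e1); last lia.
by rewrite (rel_up h3 h4 _ e2); last lia.
Qed.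

Lemma rel_shift n (A : 'M[nat]_n) v k j :
  dim_rel A (v, k) (tpow A j v, (k + j)%N).
Proof.
exists (k + j)%N => /=; split; try lia.
by rewrite -tpowD; congr tpow; lia.
Qed.

Lemma rel_lev n (A : 'M[nat]_n) a k b l j :
  dim_rel A (a, k) (b, l) -> dim_rel A (a, (k + j)%N) (b, (l + j)%N).
Proof.
case=> L /= [h1 h2 e]; exists (L + j)%N => /=; split; try lia.
have -> : (L + j - (k + j) = L - k)%N by lia.
by have -> : (L + j - (l + j) = L - l)%N by lia.
Qed.

Lemma rel_same n (A : 'M[nat]_n) a b k :
  dim_rel A (a, k) (b, k) -> exists N, tpow A N a = tpow A N b.
Proof. by case=> L /= [h1 _ e]; exists (L - k)%N. Qed.

Lemma rel_same_up n (A : 'M[nat]_n) a b N N' :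
  (N <= N')%N -> tpow A N a = tpow A N b -> tpow A N' a = tpow A N' b.
Proof.
move=> h e; have -> : (N' = (N' - N) + N)%N by lia.
by rewrite !tpowD e.
Qed.

Lemma rel_theta n (A : 'M[nat]_n) x y :
  dim_rel A x y -> dim_rel A (dim_theta A x) (dim_theta A y).
Proof. by case=> L [h1 h2 e]; exists L; split => //=; rewrite !tpowT e. Qed.

Lemma rel_add n (A : 'M[nat]_n) x x' y y' :
  dim_rel A x x' -> dim_rel A y y' -> dim_rel A (dim_add A x y) (dim_add A x' y').
Proof.
case=> L1 [h1 h2 e1] [L2 [h3 h4 e2]]; exists (L1 + L2)%N => /=; split; try lia.
rewrite !tpowDr -!tpowD.
have -> : (L1 + L2 - (x.2 + y.2) + y.2 = L2 + (L1 - x.2))%N by lia.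
have -> : (L1 + L2 - (x.2 + y.2) + x.2 = L1 + (L2 - y.2))%N by lia.
have -> : (L1 + L2 - (x'.2 + y'.2) + y'.2 = L2 + (L1 - x'.2))%N by lia.
have -> : (L1 + L2 - (x'.2 + y'.2) + x'.2 = L1 + (L2 - y'.2))%N by lia.
by rewrite !tpowD e1 e2.
Qed.

Lemma rel_zero n (A : 'M[nat]_n) x : dim_rel A x (dim_add A x x) -> dim_rel A x (0, 0%N).
Proof.
case=> L /= [h1 h2 e]; exists L => /=; split; try lia.
rewrite tpow_0; move: e; rewrite tpowDr -!tpowD.
have -> : (L - (x.2 + x.2) + x.2 = L - x.2)%N by lia.
by move/eqP; rewrite -subr_eq0 opprD addrA subrr sub0r oppr_eq0 => /eqP.
Qed.

Lemma rel_neg n (A : 'M[nat]_n) x y :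
  dim_rel A (dim_add A x y) (0, 0%N) -> dim_rel A x (- y.1, y.2).
Proof.
case=> L /= [h1 _ e]; exists L => /=; split; try lia.
move: e; rewrite tpow_0 tpowDr -!tpowD tpowN.
have -> : (L - (x.2 + y.2) + y.2 = L - x.2)%N by lia.
have -> : (L - (x.2 + y.2) + x.2 = L - y.2)%N by lia.
by move/eqP; rewrite addr_eq0 => /eqP.
Qed.



Definition Zm a b (X : 'M[nat]_(a, b)) : 'M[int]_(a, b) := map_mx (fun x : nat => x%:Z) X.

Lemma Zm_mul a b c (X : 'M[nat]_(a, b)) (Y : 'M[nat]_(b, c)) : Zm (X *m Y) = Zm X *m Zm Y.
Proof. exact: (map_mxM Posz). Qed.

Lemma Zm_tr a b (X : 'M[nat]_(a, b)) : Zm X^T = (Zm X)^T.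
Proof. by apply/matrixP => i j; rewrite !mxE. Qed.

Lemma Zm_1 a : Zm (1%:M : 'M[nat]_a) = 1%:M.
Proof. by apply/matrixP => i j; rewrite !mxE; case: (i == j). Qed.

Lemma Zm_exp a (X : 'M[nat]_a) k : Zm (X ^+ k) = Zm X ^+ k.
Proof.
elim: k => [|k IH]; first by rewrite !expr0 Zm_1.
by rewrite !exprS -!mulmxE Zm_mul IH.
Qed.

Lemma Zm_inj a b (X Y : 'M[nat]_(a, b)) : Zm X = Zm Y -> X = Y.
Proof.
by move=> e; apply/matrixP => i j; move/matrixP/(_ i j): e; rewrite !mxE; case.
Qed.

Lemma Zm_const a b k : Zm (const_mx k : 'M[nat]_(a, b)) = const_mx k%:Z.
Proof. by apply/matrixP => i j; rewrite !mxE. Qed.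

Lemma tZE n (A : 'M[nat]_n) : tZ A = (Zm A)^T.
Proof. by []. Qed.

Definition nonneg a b (X : 'M[int]_(a, b)) := forall i j, 0 <= X i j.

Lemma nonneg_Zm a b (X : 'M[nat]_(a, b)) : nonneg (Zm X).
Proof. by move=> i j; rewrite !mxE. Qed.

Lemma nonneg_tr a b (X : 'M[int]_(a, b)) : nonneg X -> nonneg X^T.
Proof. by move=> h i j; rewrite mxE. Qed.

Lemma nonneg_mul a b c (X : 'M[int]_(a, b)) (Y : 'M[int]_(b, c)) :
  nonneg X -> nonneg Y -> nonneg (X *m Y).
Proof. by move=> hX hY i j; rewrite mxE; apply: sumr_ge0 => k _; apply: mulr_ge0. Qed.

Lemma nonneg_1 a : nonneg (1%:M : 'M[int]_a).
Proof. by move=> i j; rewrite mxE; case: (i == j). Qed.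

Lemma nonneg_exp a (X : 'M[int]_a) k : nonneg X -> nonneg (X ^+ k).
Proof.
move=> h; elim: k => [|k IH]; first by rewrite expr0; apply: nonneg_1.
by rewrite exprS -mulmxE; apply: nonneg_mul.
Qed.

Lemma nonneg_tZ n (A : 'M[nat]_n) : nonneg (tZ A).
Proof. exact/nonneg_tr/nonneg_Zm. Qed.

Lemma Zm_abs a b (X : 'M[int]_(a, b)) : nonneg X -> Zm (map_mx absz X) = X.
Proof. by move=> h; apply/matrixP => i j; rewrite !mxE gez0_abs. Qed.

Lemma mx_col_eq a b (X Y : 'M[int]_(a, b)) :
  (forall j : 'I_b, X *m delta_mx j (0 : 'I_1) = Y *m delta_mx j 0) -> X = Y.
Proof.
move=> h; apply/matrixP => i j; move/matrixP/(_ i 0): (h j).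
by rewrite -!colE !mxE.
Qed.



Lemma tr_exp a (X : 'M[int]_a) k : (X ^+ k)^T = (X^T) ^+ k.
Proof.
elim: k => [|k IH]; first by rewrite !expr0 trmx1.
by rewrite exprS exprSr -!mulmxE trmx_mul IH.
Qed.

Lemma Zm_tr_exp a (X : 'M[nat]_a) k : (Zm (X ^+ k))^T = ((Zm X)^T) ^+ k.
Proof. by rewrite Zm_exp tr_exp. Qed.

Lemma cv_nonneg a (v : 'cV[int]_a) : (forall i, 0 <= v i 0) -> nonneg v.
Proof. by move=> h i j; rewrite (ord1 j). Qed.

Lemma nonneg_cv a (v : 'cV[int]_a) : nonneg v -> (forall i, 0 <= v i 0).
Proof. by move=> h i. Qed.

Lemma tpow_comm n m (A : 'M[nat]_n) (B : 'M[nat]_m) (Rt : 'M[int]_(m, n)) :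
  Rt *m tZ A = tZ B *m Rt -> forall j v, tpow B j (Rt *m v) = Rt *m tpow A j v.
Proof.
move=> e; elim=> [|j IH] v; first by rewrite !tpow0.
by rewrite !tpowS IH !mulmxA e.
Qed.

Lemma forward n m (A : 'M[nat]_n) (B : 'M[nat]_m) l R S :
  shift_equiv_by A B l R S -> unital_se B R -> dim_data_isomorphic A B.
Proof.
case=> [l0 eA eB eAR eBS] [p [k eU]].
set Rt := (Zm R)^T; set St := (Zm S)^T.
have cR : Rt *m tZ A = tZ B *m Rt.
  by rewrite !tZE /Rt -!trmx_mul -!Zm_mul eAR.
have cS : St *m tZ B = tZ A *m St.
  by rewrite !tZE /St -!trmx_mul -!Zm_mul eBS.
have tR := tpow_comm cR; have tS := tpow_comm cS.
have SR : forall v, St *m (Rt *m v) = tpow A l v.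
  by move=> v; rewrite /tpow mulmxA /St /Rt -trmx_mul -Zm_mul -eA Zm_tr_exp.
have RS : forall v, Rt *m (St *m v) = tpow B l v.
  by move=> v; rewrite /tpow mulmxA /St /Rt -trmx_mul -Zm_mul -eB Zm_tr_exp.
pose Th (x : drep n) : drep m := (Rt *m x.1, (x.2 + k)%N).
have wd : forall x y, dim_rel A x y -> dim_rel B (Th x) (Th y).
  move=> x y [L [h1 h2 e]]; exists (L + k)%N => /=; split; try lia.
  have -> : (L + k - (x.2 + k) = L - x.2)%N by lia.
  have -> : (L + k - (y.2 + k) = L - y.2)%N by lia.
  by rewrite !tR e.
have surj : forall y, dim_rel B (Th (St *m tpow B k y.1, (y.2 + l)%N)) y.
  move=> [w j] /=; apply: rel_sym; rewrite /Th /= RS -tpowD.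
  have -> : (j + l + k = j + (l + k))%N by lia.
  exact: rel_shift.
exists Th; split; first exact: wd.
split.
  move=> [a i] [b j]; exists (i + j + k + k)%N; rewrite /Th /=; split; try lia.
  rewrite mulmxDr !tpowDr !tR -!tpowD.
  congr (_ *m tpow A _ _ + _ *m tpow A _ _); lia.
split.
  move=> [a i] [b j] [L /= [h1 h2 e]].
  exists (L - k + l)%N => /=; split; try lia.
  have := congr1 (mulmx St) e; rewrite !tR !SR -!tpowD => e'.
  have -> : (L - k + l - i = l + (L - (i + k)))%N by lia.
  have -> : (L - k + l - j = l + (L - (j + k)))%N by lia.
  exact: e'.
split; first by move=> y; eexists; exact: surj.
split.
  move=> x [y [hxy hy]]; exists (Th y); split; first exact: wd.
  by move=> i; apply: nonneg_cv; apply: nonneg_mul; [exact/nonneg_tr/nonneg_Zm|exact: cv_nonneg].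
split.
  move=> y [y' [hyy' hy']]; exists (St *m tpow B k y'.1, (y'.2 + l)%N); split.
    exists (St *m tpow B k y'.1, (y'.2 + l)%N); split; first exact: rel_refl.
    move=> i; apply: nonneg_cv; apply: nonneg_mul; first exact/nonneg_tr/nonneg_Zm.
    by apply: nonneg_mul; [exact/nonneg_exp/nonneg_tZ|exact: cv_nonneg].
  exact: (rel_trans (surj y') (rel_sym hyy')).
split.
  move=> [a i]; rewrite /Th /dim_theta /= mulmxA cR -mulmxA; exact: rel_refl.
exists (p + k)%N; rewrite /Th /=; split; try lia.
have -> : (p + k - (0 + k) = p)%N by lia.
rewrite subn0; have := congr1 (@Zm _ _) eU.
by rewrite !Zm_mul !Zm_exp !Zm_tr !Zm_const.
Qed.



Lemma mexpD a (X : 'M[int]_a) i j : X ^+ (i + j) = X ^+ i *m X ^+ j.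
Proof. by rewrite exprD mulmxE. Qed.

Lemma mexp_comm a (X : 'M[int]_a) i j : X ^+ i *m X ^+ j = X ^+ j *m X ^+ i.
Proof. by rewrite -!mexpD addnC. Qed.

Lemma shiftR a b (X : 'M[int]_a) (Y : 'M[int]_b) (Rz : 'M[int]_(a, b)) N :
  X ^+ N *m (Rz *m Y) = X ^+ N *m (X *m Rz) ->
  forall x j, (N <= x)%N -> X ^+ x *m Rz *m Y ^+ j = X ^+ (x + j) *m Rz.
Proof.
move=> e x j hx; elim: j => [|j IH]; first by rewrite expr0 mulmx1 addn0.
rewrite exprSr -mulmxE mulmxA IH.
have -> : (x + j = (x + j - N) + N)%N by lia.
rewrite mexpD -!mulmxA e !mulmxA -mexpD -[X in _ *m X *m Rz]expr1 -mexpD.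
by congr (_ ^+ _ *m _); lia.
Qed.

Lemma natify a b (X : 'M[int]_(a, b)) : nonneg X -> exists Y : 'M[nat]_(b, a), (Zm Y)^T = X.
Proof. by move=> h; exists (map_mx absz X)^T; rewrite Zm_tr trmxK Zm_abs. Qed.

Lemma assemble n m (A : 'M[nat]_n) (B : 'M[nat]_m) (Rz : 'M[int]_(m, n))
  (Sz : 'M[int]_(n, m)) K c N1 N2 N3 N4 L :
  nonneg Rz -> nonneg Sz ->
  tZ B ^+ N1 *m (Rz *m tZ A) = tZ B ^+ N1 *m (tZ B *m Rz) ->
  tZ A ^+ N2 *m (Sz *m tZ B) = tZ A ^+ N2 *m (tZ A *m Sz) ->
  tZ B ^+ N3 *m (Rz *m Sz) = tZ B ^+ (N3 + c) ->
  tZ A ^+ N4 *m (Sz *m Rz) = tZ A ^+ (N4 + c) ->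
  (K <= L)%N -> tpow B (L - K) (Rz *m const_mx 1) = tpow B L (const_mx 1) ->
  unitally_shift_equivalent A B.
Proof.
set X := tZ B; set Y := tZ A.
move=> nR nS e1 e2 e3 e4 hKL eu.
have pR := shiftR e1; have pS := shiftR e2.
set a := (N1 + N3 + N4).+1; set b := N2.
set R' := X ^+ a *m Rz; set S' := Y ^+ b *m Sz.
have nR' : nonneg R' by apply: nonneg_mul => //; apply/nonneg_exp/nonneg_tZ.
have nS' : nonneg S' by apply: nonneg_mul => //; apply/nonneg_exp/nonneg_tZ.
have f1 : R' *m Y = X *m R'.
  rewrite /R' -[Y]expr1 pR; last by rewrite /a; lia.
  by rewrite mulmxA -[X in X *m X ^+ a]expr1 -mexpD addnC.
have f2 : S' *m X = Y *m S'.
  rewrite /S' -[X]expr1 pS; last by rewrite /b; lia.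
  by rewrite mulmxA -[Y in Y *m Y ^+ b]expr1 -mexpD addnC.
have f3 : R' *m S' = X ^+ (a + b + c).
  rewrite /R' /S' !mulmxA pR; last by rewrite /a; lia.
  have -> : (a + b = (a + b - N3) + N3)%N by rewrite /a; lia.
  rewrite mexpD -!mulmxA e3 -mexpD; congr (_ ^+ _); rewrite /a; lia.
have f4 : S' *m R' = Y ^+ (a + b + c).
  rewrite /R' /S' !mulmxA pS; last by rewrite /b; lia.
  have -> : (b + a = (b + a - N4) + N4)%N by rewrite /a; lia.
  rewrite mexpD -!mulmxA e4 -mexpD; congr (_ ^+ _); rewrite /a; lia.
have f5 : tpow B (L - K) (R' *m const_mx 1) = tpow B ((L - K) + (K + a)) (const_mx 1).
  rewrite /tpow /R' !mulmxA mexp_comm -!mulmxA.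
  have := eu; rewrite /tpow => ->.
  by rewrite mulmxA -mexpD; congr (_ ^+ _ *m _); lia.
have [Rn ZR] := natify nR'; have [Sn ZS] := natify nS'.
clearbody R' S'.
exists (a + b + c)%N, Rn, Sn; split.
  split.
  - by rewrite /a; lia.
  - apply: Zm_inj; apply: trmx_inj.
    by rewrite Zm_mul trmx_mul ZR ZS Zm_tr_exp -f4.
  - apply: Zm_inj; apply: trmx_inj.
    by rewrite Zm_mul trmx_mul ZR ZS Zm_tr_exp -f3.
  - apply: Zm_inj; apply: trmx_inj.
    by rewrite !Zm_mul !trmx_mul ZR -!tZE f1.
  - apply: Zm_inj; apply: trmx_inj.
    by rewrite !Zm_mul !trmx_mul ZS -!tZE f2.
exists (L - K)%N, (K + a)%N; apply: Zm_inj.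
rewrite !Zm_mul !Zm_exp !Zm_tr !Zm_const ZR.
exact: f5.
Qed.



Lemma rel_shift0 n (A : 'M[nat]_n) v j : dim_rel A (v, 0%N) (tpow A j v, j).
Proof. by have := rel_shift A v 0 j; rewrite add0n. Qed.

Lemma rel_pair n (A : 'M[nat]_n) (x : drep n) j :
  dim_rel A x (tpow A (j - x.2) x.1, maxn j x.2).
Proof.
case: x => v k /=; have := rel_shift A v k (j - k).
by have -> : (k + (j - k) = maxn j k)%N by lia.
Qed.

Lemma delta_nonneg a (i : 'I_a) j : 0 <= (delta_mx i (0 : 'I_1) : 'cV[int]_a) j 0.
Proof. by rewrite mxE; case: (_ && _). Qed.

Lemma col_build a b (r : 'I_b -> 'cV[int]_a) (j : 'I_b) :
  (\matrix_(i, k) r k i 0) *m delta_mx j 0 = r j.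
Proof. by rewrite -colE; apply/matrixP => i k; rewrite !mxE (ord1 k). Qed.

Lemma same_common a b (T : 'M[nat]_a) (X Y : 'M[int]_(a, b)) :
  (forall j : 'I_b, exists N, tpow T N (X *m delta_mx j 0) = tpow T N (Y *m delta_mx j 0)) ->
  exists N, tZ T ^+ N *m X = tZ T ^+ N *m Y.
Proof.
move=> h; have [N HN] := @fin_common b (fun j N => tpow T N (X *m delta_mx j 0) = tpow T N (Y *m delta_mx j 0))
  (fun j N N' hN e => rel_same_up hN e) h.
exists N; apply: mx_col_eq => j; rewrite -!mulmxA; exact: HN.
Qed.



Lemma backward n m (A : 'M[nat]_n) (B : 'M[nat]_m) Th :
  dim_data_iso_by A B Th -> unitally_shift_equivalent A B.
Proof.
case=> wd [hom [inj [surj [pos [posr [th un]]]]]].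
have Th0 : dim_rel B (Th (0, 0%N)) (0, 0%N).
  apply: rel_zero; have := hom (0, 0%N) (0, 0%N).
  by rewrite {1}/dim_add /= !tpow_0 addr0.
have ThD : forall v w, dim_rel B (Th (v + w, 0%N)) (dim_add B (Th (v, 0%N)) (Th (w, 0%N))).
  by move=> v w; have := hom (v, 0%N) (w, 0%N); rewrite {1}/dim_add /= !tpow0.
have hpos : forall i : 'I_n, exists y : drep m,
    dim_rel B (Th (delta_mx i 0, 0%N)) y /\ forall j, 0 <= y.1 j 0.
  move=> i; apply: pos; exists (delta_mx i 0, 0%N); split; first exact: rel_refl.
  by move=> j; apply: delta_nonneg.
have [f Hf] := fchoice hpos.
pose K := \max_(i < n) (f i).2.
pose r i := tpow B (K - (f i).2) (f i).1.
have hr : forall i, dim_rel B (Th (delta_mx i 0, 0%N)) (r i, K).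
  move=> i; apply: rel_trans (proj1 (Hf i)) _.
  have := rel_pair B (f i) K; have -> : maxn K (f i).2 = K.
    by apply/maxn_idPl; apply: leq_bigmax.
  done.
pose Rz := \matrix_(j, i) r i j 0 : 'M[int]_(m, n).
have nRz : nonneg Rz.
  move=> j i; rewrite mxE; apply: nonneg_cv; apply: nonneg_mul.
    exact/nonneg_exp/nonneg_tZ.
  exact: cv_nonneg (proj2 (Hf i)).
pose P v := dim_rel B (Th (v, 0%N)) (Rz *m v, K).
have PD : forall v w, P v -> P w -> P (v + w).
  move=> v w hv hw; apply: rel_trans (ThD v w) _.
  apply: rel_trans (rel_add hv hw) _.
  rewrite /dim_add /= -tpowDr -mulmxDr; apply: rel_sym; exact: rel_shift.
have PN : forall v, P v -> P (- v).
  move=> v hv.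
  have h1 : dim_rel B (dim_add B (Th (- v, 0%N)) (Rz *m v, K)) (0, 0%N).
    apply: rel_trans (rel_add (rel_refl _ _) (rel_sym hv)) _.
    apply: rel_trans (rel_sym (ThD (- v) v)) _; rewrite addNr; exact: Th0.
  by have := rel_neg h1; rewrite /P /= mulmxN.
have P0 : P 0.
  apply: rel_trans Th0 _; rewrite mulmx0; exists K => /=; split => //.
  by rewrite !tpow_0.
have Pe : forall i, P (delta_mx i 0).
  by move=> i; rewrite /P col_build; apply: hr.
have Pz : forall z v, P v -> P (z *: v).
  move=> z v hv; case: z => k.
    elim: k => [|k IH]; first by rewrite scale0r.
    by rewrite intS scalerDl scale1r; exact: PD hv IH.
  rewrite NegzE scaleNr; apply: PN.
  elim: k => [|k IH]; first by rewrite scale1r.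
  by rewrite intS scalerDl scale1r; exact: PD hv IH.
have Pall : forall v, P v.
  move=> v; rewrite (matrix_sum_delta v); apply: (big_ind P) => //.
  move=> i _; apply: (big_ind P) => //.
  by move=> j _; rewrite (ord1 j); apply: Pz.
have iter : forall j x, dim_rel B (Th (tpow A j x.1, x.2)) (tpow B j (Th x).1, (Th x).2).
  move=> j x; elim: j => [|j IH].
    by rewrite !tpow0 -!surjective_pairing; apply: rel_refl.
  rewrite !tpowS; apply: rel_trans (th (tpow A j x.1, x.2)) _.
  exact: rel_theta IH.
have ThV : forall v j, dim_rel B (Th (v, j)) (Rz *m v, (K + j)%N).
  move=> v j.
  have h1 : dim_rel B (Th (v, 0%N)) (tpow B j (Th (v, j)).1, (Th (v, j)).2).
    apply: rel_trans (wd _ _ (rel_shift0 A v j)) _; exact: (iter j (v, j)).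
  have h2 := rel_lev j (rel_trans (rel_sym h1) (Pall v)).
  apply: rel_trans h2 => //.
  have := rel_shift B (Th (v, j)).1 (Th (v, j)).2 j.
  by rewrite -surjective_pairing.
have hposS : forall i : 'I_m, exists g : drep n,
    (forall a, 0 <= g.1 a 0) /\ dim_rel B (Th g) (delta_mx i 0, 0%N).
  move=> i; have [|x [[y [hxy hy]] hx]] := posr (delta_mx i 0, 0%N).
    exists (delta_mx i 0, 0%N); split; first exact: rel_refl.
    by move=> j; apply: delta_nonneg.
  exists y; split => //; exact: rel_trans (wd _ _ (rel_sym hxy)) hx.
have [g Hg] := fchoice hposS.
pose K2 := \max_(i < m) (g i).2.
pose s i := tpow A (K2 - (g i).2) (g i).1.
have hs : forall i, dim_rel B (Th (s i, K2)) (delta_mx i 0, 0%N).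
  move=> i; apply: rel_trans _ (proj2 (Hg i)); apply: wd; apply: rel_sym.
  have := rel_pair A (g i) K2; have -> : maxn K2 (g i).2 = K2.
    by apply/maxn_idPl; apply: leq_bigmax.
  done.
pose Sz := \matrix_(a, i) s i a 0 : 'M[int]_(n, m).
have nSz : nonneg Sz.
  move=> j i; rewrite mxE; apply: nonneg_cv; apply: nonneg_mul.
    exact/nonneg_exp/nonneg_tZ.
  exact: cv_nonneg (proj1 (Hg i)).
have [N3 e3] : exists N, tZ B ^+ N *m (Rz *m Sz) = tZ B ^+ N *m tZ B ^+ (K + K2).
  apply: same_common => j.
  have h1 := rel_sym (ThV (Sz *m delta_mx j 0) K2); rewrite col_build in h1.
  have h2 := rel_trans (rel_trans h1 (hs j)) (rel_shift0 B (delta_mx j 0) (K + K2)).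
  have [N eN] := rel_same h2; exists N.
  by rewrite -mulmxA col_build.
have e3' : tZ B ^+ N3 *m (Rz *m Sz) = tZ B ^+ (N3 + (K + K2)) by rewrite e3 -mexpD.
have ThS : forall w j, dim_rel B (Th (Sz *m w, (K2 + j)%N)) (w, j).
  move=> w j.
  have h1 := ThV (Sz *m w) (K2 + j).
  have h2 := rel_shift B (Rz *m (Sz *m w)) (K + (K2 + j)) N3.
  have e : tpow B N3 (Rz *m (Sz *m w)) = tpow B (N3 + (K + K2)) w.
    by rewrite /tpow (mulmxA Rz) mulmxA e3'.
  rewrite e in h2.
  have h3 := rel_sym (rel_shift B w j (N3 + (K + K2))).
  have el : (K + (K2 + j) + N3 = j + (N3 + (K + K2)))%N by lia.
  rewrite el in h2.
  exact: rel_trans h1 (rel_trans h2 h3).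
have [N4 e4] : exists N, tZ A ^+ N *m (Sz *m Rz) = tZ A ^+ N *m tZ A ^+ (K2 + K).
  apply: same_common => i.
  have h1 := ThS (Rz *m delta_mx i 0) K.
  have h2 := rel_trans h1 (rel_sym (Pall (delta_mx i 0))).
  have h3 := inj _ _ h2.
  have h4 := rel_trans h3 (rel_shift0 A (delta_mx i 0) (K2 + K)).
  have [N eN] := rel_same h4; exists N.
  by rewrite -mulmxA.
have e4' : tZ A ^+ N4 *m (Sz *m Rz) = tZ A ^+ (N4 + (K + K2)).
  by rewrite e4 -mexpD (addnC K2).
have [N1 e1] : exists N, tZ B ^+ N *m (Rz *m tZ A) = tZ B ^+ N *m (tZ B *m Rz).
  apply: same_common => i.
  have h1 := th (delta_mx i 0, 0%N).
  have h2 := rel_theta (Pall (delta_mx i 0)).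
  have h : dim_rel B (Rz *m (tZ A *m delta_mx i 0), K) (tZ B *m (Rz *m delta_mx i 0), K).
    exact: rel_trans (rel_sym (Pall (tZ A *m delta_mx i 0))) (rel_trans h1 h2).
  have [N eN] := rel_same h; exists N.
  by rewrite -!mulmxA.
have [N2 e2] : exists N, tZ A ^+ N *m (Sz *m tZ B) = tZ A ^+ N *m (tZ A *m Sz).
  apply: same_common => j.
  have h1 := ThS (tZ B *m delta_mx j 0) 0; rewrite addn0 in h1.
  have hh := ThS (delta_mx j 0) 0; rewrite addn0 in hh.
  have h2 : dim_rel B (Th (tZ A *m (Sz *m delta_mx j 0), K2)) (tZ B *m delta_mx j 0, 0%N).
    exact: rel_trans (th (Sz *m delta_mx j 0, K2)) (rel_theta hh).
  have h3 := inj _ _ (rel_trans h1 (rel_sym h2)).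
  have [N eN] := rel_same h3; exists N.
  by rewrite -!mulmxA.
have [L [hK _ eL]] := rel_trans (rel_sym (Pall (const_mx 1))) un.
rewrite /= subn0 in eL.
exact: (assemble nRz nSz e1 e2 e3' e4' hK eL).
Qed.


Theorem proposition3p2 (n m : nat) (A : 'M[nat]_n) (B : 'M[nat]_m) :
  unitally_shift_equivalent A B <-> dim_data_isomorphic A B.
Proof.
split.
  by case=> l [R [S [hse hu]]]; exact: forward hse hu.
by case=> Th hTh; exact: backward hTh.
Qed.
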